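(* Let $\{\phi_i=U_i\phi\}_{i=1}^n$ be a geometrically uniform frame for $\mathbb{C}^m$ with generating group $\mathcal{Q}=\{U_1,\dots,U_n\}$, let $Q=\mathbb{Z}_{n_1}\times\cdots\times\mathbb{Z}_{n_p}$ be an additive group with a group isomorphism $\mathcal{Q}\to Q$, $U_i\mapsto q$, and write $\phi(q)=U_i\phi$ for the corresponding frame vector (so $\phi(0)=\phi$). Let $S=\sum_i\phi_i\phi_i^*$. Define $s(q)=\langle\phi(0),\phi(q)\rangle$, its Fourier transform $\hat s(h)=\frac1{\sqrt n}\sum_{q\in Q}\langle h,q\rangle s(q)$, the vector Fourier transform $\hat\phi(h)=\frac1{\sqrt n}\sum_{q\in Q}\langle h,q\rangle\phi(q)$, $\sigma(h)=n^{1/4}\sqrt{\hat s(h)}$ (where $\hat s(h)\ge0$), $\mathcal{I}=\{h\in Q:\sigma(h)\ne0\}$, and $u(h)=\hat\phi(h)/\sigma(h)$ for $h\in\mathcal{I}$. Then: (1) the numbers $\sigma(h)$, $h\in Q$, are the singular values of the $m\times n$ matrix $\Phi$ with columns $\phi_i$ (the nonzero ones being indexed by $\mathcal{I}$); (2) the dual frame vectors $\bar\phi_i=S^{-1}\phi_i$ are geometrically uniform with generating group $\mathcal{Q}$: $\bar\phi_i=U_i\bar\phi$, where $\bar\phi=S^{-1}\phi=\frac1{\sqrt n}\sum_{h\in\mathcal{I}}\frac{1}{\sigma(h)}u(h)$; (3) the canonical tight frame vectors $\mu_i=S^{-1/2}\phi_i$ are geometrically uniform with generating group $\mathcal{Q}$: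 $\mu_i=U_i\mu$, where $\mu=S^{-1/2}\phi=\frac1{\sqrt n}\sum_{h\in\mathcal{I}}u(h)$; (4) the frame bounds of $\{\phi_i\}$ are $A=\sqrt n\min_{h\in\mathcal{I}}\hat s(h)$ and $B=\sqrt n\max_{h\in\mathcal{I}}\hat s(h)$.
   Context: Inner product $\langle x,y\rangle=x^*y$. A geometrically uniform (GU) frame is a set $\{\phi_i=U_i\phi\}_{i=1}^n$ spanning $\mathbb{C}^m$, where $\{U_1,\dots,U_n\}$ is an abelian group of $n$ distinct unitary $m\times m$ matrices. Frame operator $S=\sum_i\phi_i\phi_i^*$; frame bounds $A=\lambda_{\min}(S)$, $B=\lambda_{\max}(S)$; $S^{-1/2}$ is the positive definite square root of $S^{-1}$. For $h,q\in Q=\mathbb{Z}_{n_1}\times\cdots\times\mathbb{Z}_{n_p}$, $\langle h,q\rangle=\prod_{t=1}^p e^{-2\pi i h_tq_t/n_t}$ (here $\langle h,q\rangle$ denotes this Fourier kernel, not a vector inner product). *)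

(* Defs.v *)
From HB Require Import structures.
From mathcomp Require Import all_boot all_order all_algebra all_field.
Set Implicit Arguments.
Unset Strict Implicit.
Unset Printing Implicit Defensive.
Import Order.TTheory GRing.Theory Num.Theory Num.Def.
Local Open Scope ring_scope.
Local Open Scope sesquilinear_scope.

(* The group Q = Z_{N_0} x ... x Z_{N_{p-1}} with N_t = (nm1 t).+1 >= 1.
   Elements are dependent finite functions h with h t : 'I_(N_t);
   each 'I_(k.+1) carries its canonical Z/(k+1)Z structure (Zp). *)
Definition QT (p : nat) (nm1 : 'I_p -> nat) : finType :=
  {dffun forall t : 'I_p, 'I_(nm1 t).+1}.

Definition qadd p (nm1 : 'I_p -> nat) (a b : QT nm1) : QT nm1 :=
  [ffun t => (a t + b t)%R].

Definition qzero p (nm1 : 'I_p -> nat) : QT nm1 := [ffun t => 0%R].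

(* e^{-2 pi i k / N} in algC.  N.-root (-1) is, by the definition of
   nthroot in algC, the N-th root of -1 of minimal nonnegative argument,
   i.e. e^{i pi / N}; hence its square is e^{2 pi i / N}. *)
Definition expm2pi (N k : nat) : algC := (((N.-root (-1)) ^+ 2)^-1) ^+ k.

Definition fkern p (nm1 : 'I_p -> nat) (h q : QT nm1) : algC :=
  \prod_(t < p) expm2pi (nm1 t).+1 (h t * q t)%N.

Definition adj (m n : nat) (A : 'M[algC]_(m, n)) : 'M[algC]_(n, m) :=
  A ^t*.

Definition inner (m : nat) (x y : 'cV[algC]_m) : algC := (adj x *m y) 0 0.

Definition posdef (m : nat) (P : 'M[algC]_m) : Prop :=
  adj P = P /\ forall x : 'cV[algC]_m, x != 0 -> 0 < inner x (P *m x).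

(* s is the (full) list of singular values of A : 'M_(m,n), i.e. the
   nonnegative square roots of the n eigenvalues (with multiplicity)
   of A^* A. *)
Definition singular_values (m n : nat) (A : 'M[algC]_(m, n)) (s : seq algC)
  : Prop :=
  all (fun x => 0 <= x) s /\
  char_poly (adj A *m A) = \prod_(x <- s) ('X - (x ^+ 2)%:P).

Definition is_min_of (P : algC -> Prop) (a : algC) : Prop :=
  P a /\ forall b, P b -> a <= b.
Definition is_max_of (P : algC -> Prop) (a : algC) : Prop :=
  P a /\ forall b, P b -> b <= a.

(* Main.v *)
Require Import Defs.
From HB Require Import structures.
From mathcomp Require Import all_boot all_order all_algebra all_field.
From mathcomp Require Import ring lra zify.
Set Implicit Arguments.
Unset Strict Implicit.
Unset Printing Implicit Defensive.
Import Order.TTheory GRing.Theory Num.Theory Num.Def.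
Local Open Scope ring_scope.
Lemma ML_real (R : realFieldType) (a b c d : R) : a^+2 + b^+2 = 1 -> c^+2+d^+2 = 1 -> 0 <= b -> 0 <= d -> 0 <= a*d + b*c -> (c != 1) || (d != 0) -> (a*c - b*d != 1) || (a*d+b*c != 0) -> a*c - b*d < a.
Proof.
move=> h1 h2 hb hd hi hv huv.
rewrite ltNge; apply/negP => hle.
have [ha|ha] := lerP 0 a.
  have e1 : a * (1 - c) = 0 by nra.
  have e2 : b * d = 0 by nra.
  have [c1|c1] := eqVneq c 1.
    by move: hv; rewrite c1 eqxx /=; move=> /negPf hh; nra.
  have a0 : a = 0.
    have hc : 1 - c != 0 by rewrite subr_eq0 eq_sym.
    by move: e1 => /eqP; rewrite mulf_eq0 (negPf hc) orbF => /eqP.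
  have b1 : b = 1 by nra.
  have d0 : d = 0 by nra.
  have cm : c = -1 by nra.
  nra.
have [b0|b0] := eqVneq b 0.
  have am : a = -1 by nra.
  have d0 : d = 0 by nra.
  have cm : c = -1 by nra.
  have e1 : a*c - b*d = 1 by rewrite am b0 d0 cm; ring.
  have e2 : a*d+b*c = 0 by rewrite b0 d0; ring.
  by move: huv; rewrite e1 e2 !eqxx.
have bp : 0 < b by rewrite lt_neqAle eq_sym b0.
have [c1|c1] := eqVneq c 1.
  have d0 : d = 0 by nra.
  by move: hv; rewrite c1 d0 !eqxx.
nra.
Qed.

Lemma unit_ReIm (u : algC) : `|u| = 1 -> 'Re u ^+ 2 + 'Im u ^+ 2 = 1.
Proof. by move=> h; rewrite -normC2_Re_Im h expr1n. Qed.

Lemma ML_C (u v : algC) : `|u| = 1 -> `|v| = 1 -> 0 <= 'Im u -> 0 <= 'Im v ->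
  0 <= 'Im (u * v) -> v != 1 -> u * v != 1 -> 'Re (u * v) < 'Re u.
Proof.
move=> nu nv iu iv iuv v1 uv1.
pose a : algR := in_algR (Creal_Re u).
pose b : algR := in_algR (Creal_Im u).
pose c : algR := in_algR (Creal_Re v).
pose d : algR := in_algR (Creal_Im v).
have H := @ML_real algR a b c d.
have vE : forall x y : algR, (x < y) = (algRval x < algRval y) by [].
have lE : forall x y : algR, (x <= y) = (algRval x <= algRval y) by [].
have eE : forall x y : algR, (x == y) = (algRval x == algRval y) by [].
have vM : forall x y : algR, algRval (x * y) = algRval x * algRval y by [].
have vD : forall x y : algR, algRval (x + y) = algRval x + algRval y by [].
have vN : forall x : algR, algRval (- x) = - algRval x by [].
have v1' : algRval 1 = 1 by [].
have v0 : algRval 0 = 0 by [].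
rewrite ReM ImM in iuv uv1 *.
move: H; rewrite vE /= ?(vM, vD, vN) /= => H; apply: H.
- apply: val_inj; change (algRval (a ^+ 2 + b ^+ 2) = algRval 1).
  by rewrite rmorphD !rmorphXn rmorph1 /= unit_ReIm.
- apply: val_inj; change (algRval (c ^+ 2 + d ^+ 2) = algRval 1).
  by rewrite rmorphD !rmorphXn rmorph1 /= unit_ReIm.
- by rewrite lE.
- by rewrite lE.
- rewrite lE; change (0 <= 'Re u * 'Im v + 'Im u * 'Re v).
  by rewrite [_ * 'Re v]mulrC.
- change ((algRval c != 1) || (algRval d != 0)) => /=.
  apply: contraR v1 => /norP [/negPn/eqP h1 /negPn/eqP h2].
  by apply/eqP; rewrite [v]Crect h1 h2 mulr0 addr0.
- change (('Re u * 'Re v - 'Im u * 'Im v != 1) || ('Re u * 'Im v + 'Im u * 'Re v != 0)).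
  apply: contraR uv1 => /norP [/negPn/eqP h1 /negPn/eqP h2].
  have R1 : 'Re (1:algC) = 1 by apply/Creal_ReP; rewrite rpred1.
  have I1 : 'Im (1:algC) = 0 by apply/Creal_ImP; rewrite rpred1.
  apply/eqP/eqCP; rewrite ReM ImM h1 R1 I1; split=> //.
  by rewrite -h2 [_ * 'Re v]mulrC.
Qed.


Lemma seq_max (T : eqType) (s : seq T) (f : T -> algC) :
  (forall x, x \in s -> f x \is Num.real) -> s != [::] ->
  exists2 x, x \in s & forall y, y \in s -> f y <= f x.
Proof.
elim: s => [//|x s IH] hr _.
have [->|sn] := eqVneq s [::].
  by exists x => [|y]; rewrite ?mem_seq1 ?inE // => /eqP ->.
have sub : forall y, y \in s -> y \in x :: s by move=> y ys; rewrite inE ys orbT.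
have [z zs hz] := IH (fun y ys => hr y (sub y ys)) sn.
have := real_leVge (hr x (mem_head _ _)) (hr z (sub z zs)).
case/orP => h.
  exists z; first exact: sub.
  by move=> y; rewrite inE => /orP [/eqP ->|/hz].
exists x; first exact: mem_head.
by move=> y; rewrite inE => /orP [/eqP ->|/hz /le_trans]; [|apply].
Qed.

Lemma seq_min (T : eqType) (s : seq T) (f : T -> algC) :
  (forall x, x \in s -> f x \is Num.real) -> s != [::] ->
  exists2 x, x \in s & forall y, y \in s -> f x <= f y.
Proof.
move=> hr sn; have [x xs hx] := @seq_max T s (fun x => - f x)
  (fun x xs => ltac:(by rewrite rpredN; apply: hr)) sn.
by exists x => // y /hx; rewrite lerN2.
Qed.

Lemma unit_conj (x : algC) : `|x| = 1 -> x^* = x^-1.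
Proof.
move=> nx; have x0 : x != 0 by rewrite -normr_eq0 nx oner_eq0.
by rewrite -[x^*]mul1r -(mulVf x0) -mulrA -normCK nx expr1n mulr1.
Qed.

Lemma unity_norm (x : algC) K : (0 < K)%N -> x ^+ K = 1 -> `|x| = 1.
Proof.
move=> K0 xK; apply/eqP; rewrite -(@geC0_unit_exp _ _ K.-1) ?normr_ge0 //.
by rewrite prednK // -normrX xK normr1.
Qed.

Lemma prim_inv n (x : algC) : n.-primitive_root x -> n.-primitive_root x^-1.
Proof.
case/andP => n0 /forallP h; apply/andP; split => //; apply/forallP => i.
by rewrite unity_rootE exprVn invr_eq1 -unity_rootE; apply: h.
Qed.

Lemma rootm1_prim N : (0 < N)%N -> N.-primitive_root (N.-root (-1 : algC) ^+ 2).
Proof.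
case: N => [//|[|N']] _.
  rewrite root1C sqrrN expr1n.
  by apply/andP; split => //; apply/forallP => -[[|m] hm] //; rewrite unity_rootE expr1n eqxx.
set N := N'.+2.
have N1 : (1 < N)%N by [].
pose K := (N * 2)%N.
have K0 : (0 < K)%N by [].
have [w pw] := C_prim_root_exists K0.
pose G := [seq w ^+ i | i : 'I_K].
have inG : forall x, x ^+ K = 1 -> x \in G.
  by move=> x /(prim_rootP pw) [i ->]; apply: map_f; rewrite mem_enum.
have Gun : forall x, x \in G -> x ^+ K = 1.
  move=> x /mapP [i _ ->]; by rewrite exprAC (prim_expr_order pw) expr1n.
pose cand := [seq x <- G | (x != 1) && (0 <= 'Im x)].
have m1K : (-1 : algC) ^+ K = 1 by rewrite /K mulnC exprM sqrrN expr1n expr1n.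
have m1n1 : (-1 : algC) != 1 by rewrite lt_eqF // (@lt_trans _ _ 0) ?oppr_lt0 ?ltr01.
have Im_real : forall y : algC, y \is Num.real -> 'Im y = 0 by move=> y /Creal_ImP.
have Imm1 : 'Im (-1 : algC) = 0 by apply: Im_real; rewrite rpredN rpred1.
have Im1 : 'Im (1 : algC) = 0 by apply: Im_real; rewrite rpred1.
have candn : cand != [::].
  apply/eqP => h; have : (-1 : algC) \in cand.
    by rewrite mem_filter m1n1 Imm1 lexx inG.
  by rewrite h.
have [g gc gmax] := seq_max (fun x _ => Creal_Re x) candn.
move: gc; rewrite mem_filter => /andP [/andP [g1 gI] gG].
have gK := Gun _ gG.
have gn : `|g| = 1 := unity_norm K0 gK.
have g0 : g != 0 by rewrite -normr_eq0 gn oner_eq0.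
have desc : forall (n : nat) (x : algC), x ^+ K = 1 -> 0 <= 'Im x ->
   (#|[pred i : 'I_K | ('Re x < 'Re (w ^+ i))%R]| < n)%N -> exists k, x = g ^+ k.
  elim => [//|n IH] x xK xI hc.
  have [->|x1] := eqVneq x 1; first by exists 0%N.
  have xn : `|x| = 1 := unity_norm K0 xK.
  have x0 : x != 0 by rewrite -normr_eq0 xn oner_eq0.
  have xle : 'Re x <= 'Re g by apply: gmax; rewrite mem_filter x1 xI inG.
  pose x' := x / g.
  have xx' : x = x' * g by rewrite /x' divfK.
  have x'K : x' ^+ K = 1 by rewrite /x' exprMn exprVn xK gK invr1 mulr1.
  have x'n : `|x'| = 1 := unity_norm K0 x'K.
  have [x'I|x'In] := boolP (0 <= 'Im x'); last first.
  - exfalso.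
    have x'I : 'Im x' < 0 by rewrite real_ltNge ?real0 ?Creal_Im.
    pose y := x'^*.
    have yI : 0 < 'Im y by rewrite Im_conj oppr_gt0.
    have yn : `|y| = 1 by rewrite norm_conjC.
    have gxy : x * y = g.
      by rewrite /y /x' rmorphM fmorphV /= !unit_conj // invrK mulVKf.
    have : 'Re (x * y) < 'Re x.
      apply: ML_C => //; first exact: ltW.
      - by rewrite gxy.
      - by apply/eqP => y1; move: yI; rewrite y1 Im1 ltxx.
      - by rewrite gxy.
    by rewrite gxy => h; move: (lt_le_trans h xle); rewrite ltxx.
  have hlt : 'Re x < 'Re x'.
    rewrite xx'; apply: ML_C => //; by rewrite -xx'.
  have [i0 hi0] := prim_rootP pw x'K.
  have [k hk] : exists k, x' = g ^+ k.
    apply: (IH x' x'K x'I); rewrite -ltnS; apply: leq_trans hc.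
    apply: proper_card; apply/properP; split.
      apply/subsetP => i; rewrite !inE; exact: lt_trans.
    by exists i0; rewrite !inE -hi0 ?hlt // ltxx.
  by exists k.+1; rewrite xx' hk exprSr.
have wg : exists j, w = g ^+ j.
  have wK := prim_expr_order pw.
  have [wI|wIn] := boolP (0 <= 'Im w).
    by apply: (desc _ w wK wI); apply: ltnSn.
  have wcK : w^* ^+ K = 1 by rewrite -rmorphXn wK rmorph1.
  have wcI : 0 <= 'Im w^* by rewrite Im_conj oppr_ge0 ltW // real_ltNge ?real0 ?Creal_Im.
  have [k hk] := desc _ _ wcK wcI (ltnSn _).
  have gV : g^-1 = g ^+ K.-1.
    by apply: (mulfI g0); rewrite divff // -exprS prednK.
  exists (K.-1 * k)%N.
  by rewrite -[w]conjCK hk rmorphXn /= unit_conj // gV exprM.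
have pg : K.-primitive_root g.
  have [mm pm mK] := prim_order_exists K0 gK.
  have [j wj] := wg.
  have Km : (K %| mm)%N.
    by rewrite (prim_order_dvd pw) wj -exprM mulnC exprM (prim_expr_order pm) expr1n.
  by have -> : K = mm by apply/eqP; rewrite eqn_dvd Km mK.
pose z := N.-root (-1 : algC).
have zN : z ^+ N = -1 by rewrite /z rootCK.
have zI : 0 <= 'Im z by apply: Im_rootC_ge0.
have gN : g ^+ N = -1.
  have : (g ^+ N) ^+ 2 == 1 by rewrite -exprM gK.
  rewrite sqrf_eq1 => /orP [/eqP h|/eqP //].
  by move: (prim_order_dvd pg N); rewrite h eqxx => /(dvdn_leq (ltnW N1)); rewrite /K; lia.
have h1 : 'Re g <= 'Re z by apply: rootC_Re_max.
have zK : z ^+ K = 1 by rewrite /K exprM zN sqrrN expr1n.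
have z1 : z != 1 by apply/eqP => z1; move: zN; rewrite z1 expr1n => /eqP; rewrite eq_sym (negPf m1n1).
have h2 : 'Re z <= 'Re g by apply: gmax; rewrite mem_filter z1 zI inG.
have zg : z = g.
  apply: eqC_semipolar.
  - by rewrite (unity_norm K0 zK) gn.
  - by apply/eqP; rewrite eq_le h1 h2.
  - by apply: mulr_ge0.
have pz : K.-primitive_root z by rewrite zg.
have := exp_prim_root pz 2.
by rewrite /K (gcdn_idPl _) ?dvdn_mull // mulnK.
Qed.


Definition omg (N : nat) : algC := ((N.-root (-1)) ^+ 2)^-1.

Lemma omg_prim (N : nat) : (0 < N)%N -> N.-primitive_root (omg N).
Proof. by move=> N0; apply: prim_inv; apply: rootm1_prim. Qed.

Lemma expm2piE N k : expm2pi N k = omg N ^+ k.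
Proof. by []. Qed.

Lemma omgX_mod N k : omg N.+1 ^+ (k %% N.+1) = omg N.+1 ^+ k.
Proof. exact: (prim_expr_mod (omg_prim (ltn0Sn N))). Qed.

Lemma omgX_norm N k : `|omg N.+1 ^+ k| = 1.
Proof.
apply: (@unity_norm _ N.+1) => //.
by rewrite exprAC (prim_expr_order (omg_prim (ltn0Sn N))) expr1n.
Qed.

Section Chars.
Variables (p : nat) (nm1 : 'I_p -> nat).
Local Notation Q := (QT nm1).

Lemma qaddE (a b : Q) t : qadd a b t = (a t + b t)%R.
Proof. by rewrite /qadd ffunE. Qed.

Lemma qzeroE t : (qzero nm1 t : nat) = 0%N.
Proof. by rewrite /qzero ffunE. Qed.

Lemma qadd_inj (b : Q) : injective (qadd b).
Proof.
move=> x y /ffunP h; apply/ffunP => t; move: (h t); rewrite !qaddE.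
exact: addrI.
Qed.

Lemma qaddC (a b : Q) : qadd a b = qadd b a.
Proof. by apply/ffunP => t; rewrite !qaddE addrC. Qed.

Lemma qadd0 (a : Q) : qadd (qzero nm1) a = a.
Proof. by apply/ffunP => t; rewrite qaddE /qzero ffunE add0r. Qed.

Lemma fk_add h (a b : Q) : fkern h (qadd a b) = fkern h a * fkern h b.
Proof.
rewrite /fkern -big_split /=; apply: eq_bigr => t _.
rewrite !expm2piE qaddE -exprD -mulnDr.
have -> : ((a t + b t)%R : 'I_(nm1 t).+1) = ((a t + b t) %% (nm1 t).+1)%N :> nat by [].
by rewrite mulnC exprM omgX_mod -exprM mulnC.
Qed.

Lemma fk_sym (h q : Q) : fkern h q = fkern q h.
Proof. by apply: eq_bigr => t _; rewrite mulnC. Qed.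

Lemma fk_zero (h : Q) : fkern h (qzero nm1) = 1.
Proof. by rewrite /fkern big1 // => t _; rewrite qzeroE muln0 expm2piE expr0. Qed.

Lemma fk_norm (h q : Q) : `|fkern h q| = 1.
Proof. by rewrite /fkern normr_prod big1 // => t _; rewrite expm2piE omgX_norm. Qed.

Lemma fk_conjM (h q : Q) : fkern h q * (fkern h q)^* = 1.
Proof. by rewrite -normCK fk_norm expr1n. Qed.

Lemma fk_sep (h k : Q) : h != k -> exists b, fkern h b != fkern k b.
Proof.
move=> hk.
have [t ht] : exists t, h t != k t.
  apply/existsP; apply: contraR hk => /existsPn hn; apply/eqP/ffunP => t.
  by apply/eqP; move: (hn t); rewrite negbK.
pose b : Q := finfun (fun s : 'I_p => (inZp (s == t) : 'I_(nm1 s).+1)).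
exists b.
have N1 : (1 < (nm1 t).+1)%N.
  rewrite ltnS lt0n; apply: contra ht => /eqP e; apply/eqP/val_inj => /=.
  have h1 := ltn_ord (h t); have h2 := ltn_ord (k t).
  move: (h t : nat) (k t : nat) h1 h2; rewrite e; lia.
have fE : forall g : Q, fkern g b = omg (nm1 t).+1 ^+ (g t).
  move=> g; rewrite /fkern (bigD1 t) //= big1 ?mulr1.
    by rewrite expm2piE /b ffunE /= eqxx modn_small // muln1.
  move=> s st; rewrite expm2piE /b ffunE /= (negPf st) mod0n muln0 //.
by rewrite !fE (eq_prim_root_expr (omg_prim (ltn0Sn _))) !modn_small.
Qed.

Lemma fk_orth (h k : Q) :
  \sum_(q : Q) fkern h q * (fkern k q)^* = (h == k)%:R * #|Q|%:R.
Proof.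
have [<-|hk] := eqVneq h k.
  rewrite (eq_bigr (fun _ => 1)); last by move=> q _; apply: fk_conjM.
  by rewrite sumr_const mul1r.
rewrite mul0r.
pose g q := fkern h q * (fkern k q)^*.
have gM : forall a b, g (qadd a b) = g a * g b.
  by move=> a b; rewrite /g !fk_add rmorphM /=; ring.
have [b hb] := fk_sep hk.
have gb : g b != 1.
  apply: contra hb => /eqP gb1; apply/eqP.
  have : g b * fkern k b = fkern k b by rewrite gb1 mul1r.
  by rewrite /g -mulrA [_^* * _]mulrC fk_conjM mulr1.
have : \sum_q g q = g b * \sum_q g q.
  rewrite {1}(reindex_inj (@qadd_inj b)) /= mulr_sumr.
  by apply: eq_bigr => q _; rewrite gM.
move/eqP; rewrite -subr_eq0 -{1}[\sum_q g q]mul1r -mulrBl mulf_eq0 subr_eq0 eq_sym (negPf gb) /=.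
by move/eqP.
Qed.

End Chars.


Section Adj.
Lemma cadjE m n (A : 'M[algC]_(m, n)) i j : adj A i j = (A j i)^*.
Proof. by rewrite !mxE. Qed.
Lemma cadjD m n (A B : 'M[algC]_(m, n)) : adj (A + B) = adj A + adj B.
Proof. by apply/matrixP => i j; rewrite !mxE rmorphD. Qed.
Lemma cadjZ m n a (A : 'M[algC]_(m, n)) : adj (a *: A) = a^* *: adj A.
Proof. by apply/matrixP => i j; rewrite !mxE rmorphM. Qed.
Lemma cadj0 m n : adj (0 : 'M[algC]_(m, n)) = 0.
Proof. by apply/matrixP => i j; rewrite !mxE rmorph0. Qed.
Lemma cadj_sum m n (I : finType) (F : I -> 'M[algC]_(m, n)) :
  adj (\sum_i F i) = \sum_i adj (F i).
Proof.
by apply/matrixP => i j; rewrite cadjE !summxE rmorph_sum; apply: eq_bigr => k _; rewrite cadjE.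
Qed.
Lemma cadjM m n r (A : 'M[algC]_(m, n)) (B : 'M[algC]_(n, r)) :
  adj (A *m B) = adj B *m adj A.
Proof.
apply/matrixP => i j; rewrite cadjE !mxE rmorph_sum; apply: eq_bigr => k _.
by rewrite rmorphM !cadjE mulrC.
Qed.
Lemma cadjK m n (A : 'M[algC]_(m, n)) : adj (adj A) = A.
Proof. by apply/matrixP => i j; rewrite !cadjE conjCK. Qed.
Lemma cadj_inj m n : injective (@adj m n).
Proof. by move=> A B h; rewrite -(cadjK A) h cadjK. Qed.
Lemma cadj1 m : adj (1%:M : 'M[algC]_m) = 1%:M.
Proof. by apply/matrixP => i j; rewrite cadjE !mxE eq_sym; case: eqP; rewrite ?rmorph1 ?rmorph0. Qed.

Definition nrm m (x : 'cV[algC]_m) := (adj x *m x) 0 0.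
Lemma nrmE m (x : 'cV[algC]_m) : nrm x = \sum_i `|x i 0| ^+ 2.
Proof. by rewrite /nrm mxE; apply: eq_bigr => i _; rewrite cadjE normCKC. Qed.
Lemma nrm_ge0 m (x : 'cV[algC]_m) : 0 <= nrm x.
Proof. by rewrite nrmE; apply: sumr_ge0 => i _; apply: exprn_ge0. Qed.
Lemma nrm_eq0 m (x : 'cV[algC]_m) : (nrm x == 0) = (x == 0).
Proof.
apply/idP/idP => [/eqP h|/eqP ->]; last by rewrite /nrm mulmx0 mxE.
apply/eqP/matrixP => i j; rewrite (ord1 j) mxE.
have := psumr_eq0P (fun i _ => exprn_ge0 2 (normr_ge0 (x i 0))) (etrans (esym (nrmE x)) h).
by move=> /(_ i isT) /eqP; rewrite expf_eq0 /= normr_eq0 => /eqP.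
Qed.
Lemma nrm_gt0 m (x : 'cV[algC]_m) : x != 0 -> 0 < nrm x.
Proof. by move=> x0; rewrite lt_def nrm_eq0 x0 nrm_ge0. Qed.

Lemma adj_unitary m (A : 'M[algC]_m) : A \is unitarymx -> A *m adj A = 1%:M /\ adj A *m A = 1%:M.
Proof. by move/unitarymxP => h; split => //; apply: mulmx1C. Qed.
End Adj.


Lemma char_poly_sim (R : comNzRingType) k (A Qm Pm : 'M[R]_k) :
  Qm *m Pm = 1%:M -> char_poly (Qm *m A *m Pm) = char_poly A.
Proof.
move=> hQP; rewrite /char_poly.
have e : char_poly_mx (Qm *m A *m Pm) =
    map_mx polyC Qm *m char_poly_mx A *m map_mx polyC Pm.
  rewrite /char_poly_mx mulmxBr mulmxBl !map_mxM mul_mx_scalar -scalemxAl.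
  by rewrite -(map_mxM _ Qm Pm) hQP map_mx1 scalemx1.
by rewrite e !det_mulmx mulrAC -det_mulmx -(map_mxM _ Qm Pm) hQP map_mx1 det1 mul1r.
Qed.

Lemma sqrt_unique m (P : 'M[algC]_m) (d : algC) (x : 'cV[algC]_m) : posdef P -> 0 < d ->
  P *m (P *m x) = d ^+ 2 *: x -> P *m x = d *: x.
Proof.
move=> [_ hP] d0 hx.
pose z := P *m x - d *: x.
have Pz : P *m z = - d *: z.
  rewrite /z mulmxBr hx -scalemxAr scalerBr !scaleNr opprK scalerA -expr2 addrC //.
apply/eqP; rewrite -subr_eq0; apply/negP => /negP z0.
have := hP z z0; rewrite /inner Pz -scalemxAr mxE -/(nrm z).
by rewrite mulNr oppr_gt0 pmulr_rlt0 // => h; have := le_lt_trans (nrm_ge0 z) h; rewrite ltxx.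
Qed.

Section Main.
Variables (p : nat) (nm1 : 'I_p -> nat) (m : nat).
Local Notation Q := (QT nm1).
Variables (U : Q -> 'M[algC]_m) (phi : 'cV[algC]_m).
Hypothesis hU : forall q, U q \is unitarymx.
Hypothesis hhom : forall a b, U (qadd a b) = U a *m U b.

Local Notation n := #|Q|.
Local Notation q0 := (qzero nm1).

Lemma n_gt0 : (0 < n)%N.
Proof. by apply/card_gt0P; exists q0. Qed.
Lemma nR0 : (n%:R : algC) != 0.
Proof. by rewrite pnatr_eq0 -lt0n n_gt0. Qed.

Lemma U0 : U q0 = 1%:M.
Proof.
have e : U q0 = U q0 *m U q0 by rewrite -hhom qadd0.
have [h1 _] := adj_unitary (hU q0).
by rewrite -[RHS]h1 {2}e -mulmxA h1 mulmx1.
Qed.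

Definition Ph (h : Q) : 'M[algC]_m := (n%:R)^-1 *: \sum_q fkern h q *: U q.

Lemma UPh q h : U q *m Ph h = (fkern h q)^* *: Ph h.
Proof.
have e : fkern h q *: (U q *m Ph h) = Ph h.
  rewrite /Ph -scalemxAr scalerA mulrC -scalerA; congr (_ *: _).
  rewrite mulmx_sumr scaler_sumr [RHS](reindex_inj (@qadd_inj _ _ q)) /=.
  by apply: eq_bigr => a _; rewrite -scalemxAr -hhom scalerA fk_add.
by rewrite -{2}e scalerA mulrC fk_conjM scale1r.
Qed.

Lemma adjUPh q h : adj (U q) *m Ph h = fkern h q *: Ph h.
Proof.
have [_ h2] := adj_unitary (hU q).
have e : Ph h = (fkern h q)^* *: (adj (U q) *m Ph h).
  by rewrite scalemxAr -UPh mulmxA h2 mul1mx.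
by rewrite {2}e scalerA fk_conjM scale1r.
Qed.

Lemma PhU h q : Ph h *m U q = U q *m Ph h.
Proof.
rewrite /Ph -scalemxAl -scalemxAr mulmx_suml mulmx_sumr; congr (_ *: _).
apply: eq_bigr => a _; rewrite -scalemxAl -scalemxAr -!hhom qaddC //.
Qed.

Lemma PhPh h k : Ph h *m Ph k = (h == k)%:R *: Ph k.
Proof.
rewrite {1}/Ph -scalemxAl mulmx_suml.
rewrite (eq_bigr (fun a => (fkern h a * (fkern k a)^*) *: Ph k)); last first.
  by move=> a _; rewrite -scalemxAl UPh scalerA.
by rewrite -scaler_suml fk_orth scalerA mulrCA mulVf ?nR0 ?mulr1.
Qed.

Lemma adjPh h : adj (Ph h) = (n%:R)^-1 *: \sum_q (fkern h q)^* *: adj (U q).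
Proof.
rewrite /Ph; rewrite cadjZ cadj_sum fmorphV /= conjC_nat; congr (_ *: _).
by apply: eq_bigr => q _; rewrite cadjZ.
Qed.

Lemma adjPhPh h k : adj (Ph h) *m Ph k = (k == h)%:R *: Ph k.
Proof.
rewrite adjPh -scalemxAl mulmx_suml.
rewrite (eq_bigr (fun a => (fkern k a * (fkern h a)^*) *: Ph k)); last first.
  by move=> a _; rewrite -scalemxAl adjUPh scalerA mulrC.
by rewrite -scaler_suml fk_orth scalerA mulrCA mulVf ?nR0 ?mulr1.
Qed.

Lemma sumPh : \sum_h Ph h = 1%:M.
Proof.
rewrite /Ph -scaler_sumr exchange_big /=.
rewrite (eq_bigr (fun q => (q == q0)%:R * n%:R *: U q)); last first.
  move=> q _; rewrite -scaler_suml; congr (_ *: _).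
  rewrite -(fk_orth q q0); apply: eq_bigr => h _.
  by rewrite fk_sym (fk_sym q0) fk_zero rmorph1 mulr1.
rewrite (bigD1 q0) //= big1 ?addr0; last first.
  by move=> q /negPf ->; rewrite mul0r scale0r.
by rewrite eqxx mul1r scalerA mulVf ?nR0 // scale1r U0.
Qed.

Lemma adjPh_id h : adj (Ph h) = Ph h.
Proof.
rewrite -[adj (Ph h)]mulmx1 -sumPh mulmx_sumr.
rewrite (bigD1 h) //= big1 ?addr0; last first.
  by move=> k kh; rewrite adjPhPh (negPf kh) scale0r.
by rewrite adjPhPh eqxx scale1r.
Qed.


Definition v h := Ph h *m phi.
Definition phiq q := U q *m phi.
Definition Smx := \sum_q phiq q *m adj (phiq q).
Definition cc h := n%:R * nrm (v h).

Lemma sumfU k : \sum_q fkern k q *: U q = n%:R *: Ph k.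
Proof. by rewrite /Ph scalerA mulfV ?nR0 ?scale1r. Qed.

Lemma phi_sum : phi = \sum_h v h.
Proof. by rewrite /v -mulmx_suml sumPh mul1mx. Qed.

Lemma Uv q h : U q *m v h = (fkern h q)^* *: v h.
Proof. by rewrite /v mulmxA UPh scalemxAl. Qed.

Lemma Uphi q : phiq q = \sum_h (fkern h q)^* *: v h.
Proof.
rewrite /phiq {1}phi_sum mulmx_sumr; apply: eq_bigr => h _; exact: Uv.
Qed.

Lemma Phv k h : Ph k *m v h = (k == h)%:R *: v h.
Proof. by rewrite /v mulmxA PhPh scalemxAl. Qed.

Lemma vPh h : v h = Ph h *m v h.
Proof. by rewrite Phv eqxx scale1r. Qed.

Lemma adjv h : adj (v h) = adj phi *m Ph h.
Proof. by rewrite /v cadjM adjPh_id. Qed.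

Lemma vv h k : adj (v h) *m v k = (h == k)%:R *: (adj (v k) *m v k).
Proof.
have e : forall a b, adj (v a) *m v b = (a == b)%:R *: (adj phi *m Ph b *m phi).
  move=> a b; rewrite adjv /v mulmxA -(mulmxA (adj phi)) PhPh.
  by rewrite -scalemxAr -scalemxAl.
by rewrite !e eqxx scale1r.
Qed.

Lemma SPh k : Smx *m Ph k = n%:R *: (v k *m adj (v k)).
Proof.
rewrite /Smx mulmx_suml.
rewrite (eq_bigr (fun q => fkern k q *: (U q *m phi *m adj (v k)))); last first.
  move=> q _; rewrite /phiq cadjM -!mulmxA adjUPh.
  by rewrite -(scalemxAr (fkern k q) (adj phi)) -(scalemxAr (fkern k q) phi) -(scalemxAr (fkern k q) (U q)) adjv !mulmxA.
rewrite (eq_bigr (fun q => (fkern k q *: U q) *m (phi *m adj (v k)))); last by move=> q _; rewrite -mulmxA scalemxAl.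
by rewrite -mulmx_suml sumfU -scalemxAl /v mulmxA.
Qed.

Lemma Sv k : Smx *m v k = cc k *: v k.
Proof.
rewrite {1}vPh mulmxA SPh -scalemxAl -mulmxA [adj _ *m _]mx11_scalar.
by rewrite mul_mx_scalar scalerA /cc.
Qed.

Lemma Smx_adj : adj Smx = Smx.
Proof. by rewrite /Smx cadj_sum; apply: eq_bigr => q _; rewrite cadjM cadjK. Qed.

Lemma mx11_nrm (w : 'M[algC]_1) : (w *m adj w) 0 0 = `|w 0 0| ^+ 2.
Proof. by rewrite mxE big_ord1 cadjE normCK. Qed.

Lemma Smx_unit :
  \rank (\matrix_(i < m, j < n) (U (enum_val j) *m phi) i 0) = m -> Smx \in unitmx.
Proof.
move=> hspan; rewrite unitmxE unitfE; apply/negP => /det0P [y y0 hy].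
have hw : forall q, y *m phiq q = 0.
  have h0 : \sum_q `|(y *m phiq q) 0 0| ^+ 2 = 0.
    have e : (y *m Smx *m adj y) 0 0 = 0 by rewrite hy mul0mx mxE.
    rewrite -[RHS]e /Smx mulmx_sumr mulmx_suml summxE; apply: eq_bigr => q _.
    by rewrite -mx11_nrm cadjM !mulmxA.
  move=> q; have := psumr_eq0P (fun q _ => exprn_ge0 2 (normr_ge0 ((y *m phiq q) 0 0))) h0.
  move=> /(_ q isT) /eqP; rewrite expf_eq0 /= normr_eq0 => /eqP e.
  by apply/matrixP => i j; rewrite (ord1 i) (ord1 j) e mxE.
have : y *m (\matrix_(i < m, j < n) (U (enum_val j) *m phi) i 0) == 0.
  apply/eqP/matrixP => i j; rewrite !mxE (ord1 i).
  have := congr1 (fun M : 'M[algC]_1 => M 0 0) (hw (enum_val j)); rewrite /= !mxE => e; rewrite -[RHS]e.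
  by apply: eq_bigr => k _; rewrite mxE.
by rewrite mulmx_free_eq0 ?(negPf y0) // /row_free hspan.
Qed.

Lemma cc_ge0 h : 0 <= cc h.
Proof. by rewrite /cc mulr_ge0 ?ler0n ?nrm_ge0. Qed.

Lemma cc_eq0 h : (cc h == 0) = (v h == 0).
Proof. by rewrite /cc mulf_eq0 (negPf nR0) nrm_eq0. Qed.

Lemma cc_real h : (cc h)^* = cc h.
Proof. exact: geC0_conj (cc_ge0 h). Qed.

Lemma sumPh_mul (d : Q -> algC) k : (\sum_h d h *: Ph h) *m Ph k = d k *: Ph k.
Proof.
rewrite mulmx_suml (bigD1 k) //= big1 ?addr0; last first.
  by move=> h hk; rewrite -scalemxAl PhPh (negPf hk) scale0r scaler0.
by rewrite -scalemxAl PhPh eqxx scale1r.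
Qed.

Lemma mul_sumPh (d : Q -> algC) k : Ph k *m (\sum_h d h *: Ph h) = d k *: Ph k.
Proof.
rewrite mulmx_sumr (bigD1 k) //= big1 ?addr0; last first.
  by move=> h hk; rewrite -scalemxAr PhPh eq_sym (negPf hk) scale0r scaler0.
by rewrite -scalemxAr PhPh eqxx scale1r.
Qed.

Lemma sumPh_v (d : Q -> algC) k : (\sum_h d h *: Ph h) *m v k = d k *: v k.
Proof. by rewrite vPh mulmxA sumPh_mul -scalemxAl -vPh. Qed.

Lemma sumPh_comm (d : Q -> algC) q :
  (\sum_h d h *: Ph h) *m phiq q = U q *m ((\sum_h d h *: Ph h) *m phi).
Proof.
rewrite /phiq mulmxA mulmx_suml mulmxA mulmx_sumr; congr (_ *m _).
by apply: eq_bigr => h _; rewrite -scalemxAl -scalemxAr PhU.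
Qed.

Local Notation sqn := (sqrtC (n%:R : algC)).

Lemma sqn_gt0 : 0 < sqn.
Proof. by rewrite sqrtC_gt0 ltr0n n_gt0. Qed.
Lemma sqn0 : sqn != 0.
Proof. by rewrite gt_eqF // sqn_gt0. Qed.
Lemma sqn2 : sqn ^+ 2 = n%:R.
Proof. exact: sqrtCK. Qed.
Lemma sqn_conj : sqn^* = sqn.
Proof. by rewrite geC0_conj // ltW // sqn_gt0. Qed.
Lemma sqnK : sqn^-1 * sqn^-1 * n%:R = 1.
Proof. by rewrite -invfM -expr2 sqn2 mulVf // nR0. Qed.

Definition Phi := \matrix_(i < m, j < n) phiq (enum_val j) i 0.
Definition Wm : 'M[algC]_n :=
  \matrix_(i, j) (sqn^-1 * (fkern (enum_val i) (enum_val j))^*).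
Definition Dm : 'M[algC]_n := diag_mx (\row_i cc (enum_val i)).

Lemma W_unitary : Wm *m adj Wm = 1%:M.
Proof.
apply/matrixP => i k; rewrite !mxE.
rewrite (eq_bigr (fun j => sqn^-1 * sqn^-1 *
    (fkern (enum_val k) (enum_val j) * (fkern (enum_val i) (enum_val j))^*))); last first.
  move=> j _; rewrite !mxE rmorphM /= conjCK fmorphV /= sqn_conj; ring.
rewrite -mulr_sumr -(big_enum_val (fun q => fkern (enum_val k) q * (fkern (enum_val i) q)^*)) /= fk_orth (inj_eq enum_val_inj) eq_sym.
by rewrite mulrCA sqnK mulr1.
Qed.

Lemma gram : adj Phi *m Phi = adj Wm *m Dm *m Wm.
Proof.
apply/matrixP => a b.
have -> : (adj Phi *m Phi) a b = (adj (phiq (enum_val a)) *m phiq (enum_val b)) 0 0.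
  by rewrite !mxE; apply: eq_bigr => i _; rewrite !mxE.
rewrite !Uphi cadj_sum mulmx_suml summxE.
under eq_bigr => h _ do rewrite cadjZ mulmx_sumr summxE.
rewrite mul_mx_diag mxE.
under [RHS]eq_bigr => j _ do rewrite !mxE.
rewrite -(big_enum_val (fun h => (sqn^-1 * (fkern h (enum_val a))^*)^* * cc h *
    (sqn^-1 * (fkern h (enum_val b))^*))) /=.
apply: eq_bigr => h _.
rewrite (bigD1 h) //= big1 ?addr0; last first.
  by move=> k kh; rewrite -scalemxAl -scalemxAr vv eq_sym (negPf kh) scale0r !scaler0 mxE.
rewrite -scalemxAl -scalemxAr vv eqxx scale1r scalerA [LHS]mxE -/(nrm (v h)).
rewrite rmorphM /= fmorphV /= sqn_conj !conjCK /cc.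
have := sqnK; move: (sqn^-1) (n%:R : algC) => w N hw.
rewrite -[LHS]mul1r -hw; ring.
Qed.

Lemma char_gram : char_poly (adj Phi *m Phi) = \prod_(h <- enum Q) ('X - (cc h)%:P).
Proof.
rewrite gram char_poly_sim; last exact: mulmx1C W_unitary.
rewrite char_poly_trig ?diag_mx_is_trig // big_enum /= (big_enum_val (fun h => 'X - (cc h)%:P)) /=.
by apply: eq_bigr => i _; rewrite !mxE eqxx mulr1n.
Qed.

Lemma Ph_nrm h x : (adj x *m Ph h *m x) 0 0 = nrm (Ph h *m x).
Proof. by rewrite /nrm cadjM adjPh_id !mulmxA -(mulmxA (adj x) (Ph h) (Ph h)) PhPh eqxx scale1r. Qed.

Definition dd h := (sqrtC (cc h))^-1.

Lemma sqnV_n x : sqn^-1 * (n%:R * x) = sqn * x.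
Proof.
rewrite mulrA; congr (_ * _); apply: (mulfI sqn0).
by rewrite mulrA divff ?sqn0 // mul1r -expr2 sqn2.
Qed.

Lemma shat_eq h :
  sqn^-1 * \sum_(q : Q) fkern h q * inner (phiq q0) (phiq q) = sqn * nrm (v h).
Proof.
have e : \sum_(q : Q) fkern h q * inner (phiq q0) (phiq q) =
    (adj phi *m (\sum_q fkern h q *: U q) *m phi) 0 0.
  rewrite mulmx_sumr mulmx_suml summxE; apply: eq_bigr => q _.
  by rewrite /inner /phiq U0 mul1mx -scalemxAr -scalemxAl [RHS]mxE mulmxA.
by rewrite e sumfU -scalemxAr -scalemxAl mxE Ph_nrm sqnV_n.
Qed.

Lemma phihat_eq h : sqn^-1 *: \sum_(q : Q) fkern h q *: phiq q = sqn *: v h.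
Proof.
rewrite /phiq (eq_bigr (fun q => (fkern h q *: U q) *m phi)); last first.
  by move=> q _; rewrite scalemxAl.
rewrite -mulmx_suml sumfU -scalemxAl scalerA -/(v h); congr (_ *: _).
by have := sqnV_n 1; rewrite !mulr1.
Qed.

Lemma sigma_eq h : sqrtC sqn * sqrtC (sqn * nrm (v h)) = sqn * sqrtC (nrm (v h)).
Proof.
rewrite sqrtCM ?nnegrE ?nrm_ge0 ?ltW ?sqn_gt0 // mulrA -expr2 sqrtCK //.
Qed.

Lemma cc_eq h : cc h = (sqn * sqrtC (nrm (v h))) ^+ 2.
Proof. by rewrite exprMn sqn2 sqrtCK. Qed.

Lemma cc_shat h : cc h = sqn * (sqn * nrm (v h)).
Proof. by rewrite mulrA -expr2 sqn2. Qed.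

Lemma dd_eq h : dd h = (sqn * sqrtC (nrm (v h)))^-1.
Proof. by rewrite /dd /cc sqrtCM ?nnegrE ?nrm_ge0 ?ler0n. Qed.

Lemma sig_eq0 h : (sqn * sqrtC (nrm (v h)) == 0) = (v h == 0).
Proof. by rewrite mulf_eq0 (negPf sqn0) sqrtC_eq0 nrm_eq0. Qed.



Hypothesis hS : Smx \in unitmx.

Lemma Ph0 h : v h = 0 -> Ph h = 0.
Proof.
move=> vh; rewrite -(mulKmx hS (Ph h)) SPh vh mul0mx scaler0 mulmx0 //.
Qed.

Lemma SPhc h : Smx *m Ph h = cc h *: Ph h.
Proof.
have [vh|vh] := eqVneq (v h) 0.
  by rewrite Ph0 // mulmx0 scaler0.
have c0 : cc h != 0 by rewrite cc_eq0.
have e : Ph h = (n%:R / cc h) *: (v h *m adj (v h)).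
  apply/eqP; rewrite -subr_eq0; apply/eqP.
  rewrite -(mulKmx hS (_ - _)) mulmxBr SPh -scalemxAr mulmxA Sv -scalemxAl scalerA.
  by rewrite divfK // subrr mulmx0.
by rewrite SPh e scalerA mulrCA divff // mulr1.
Qed.

Lemma S_decomp : Smx = \sum_h cc h *: Ph h.
Proof.
by rewrite -[Smx]mulmx1 -sumPh mulmx_sumr; apply: eq_bigr => h _; rewrite SPhc.
Qed.

Lemma PhS h : Ph h *m Smx = cc h *: Ph h.
Proof. by rewrite S_decomp mul_sumPh. Qed.

Lemma invS : invmx Smx = \sum_h (cc h)^-1 *: Ph h.
Proof.
have e : Smx *m (\sum_h (cc h)^-1 *: Ph h) = 1%:M.
  rewrite -sumPh mulmx_sumr; apply: eq_bigr => h _.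
  rewrite -scalemxAr SPhc scalerA.
  have [vh|vh] := eqVneq (v h) 0; first by rewrite Ph0 // !scaler0.
  by rewrite mulVf ?scale1r // cc_eq0.
by rewrite -[RHS](mulKmx hS) e mulmx1.
Qed.

Lemma invS_v k : invmx Smx *m v k = (cc k)^-1 *: v k.
Proof. by rewrite invS sumPh_v. Qed.

Definition Pm := \sum_h dd h *: Ph h.

Lemma dd_ge0 h : 0 <= dd h.
Proof. by rewrite /dd invr_ge0 sqrtC_ge0 cc_ge0. Qed.

Lemma dd_sq h : dd h ^+ 2 = (cc h)^-1.
Proof. by rewrite /dd exprVn sqrtCK. Qed.

Lemma Pm_sq : Pm *m Pm = invmx Smx.
Proof.
rewrite invS {1}/Pm mulmx_suml; apply: eq_bigr => h _.
by rewrite -scalemxAl mul_sumPh scalerA -expr2 dd_sq.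
Qed.

Lemma Pm_adj : adj Pm = Pm.
Proof.
rewrite /Pm cadj_sum; apply: eq_bigr => h _.
by rewrite cadjZ adjPh_id geC0_conj ?dd_ge0.
Qed.



Lemma Pm_posdef : posdef Pm.
Proof.
split; first exact: Pm_adj.
move=> x x0.
have [h hx] : exists h, Ph h *m x != 0.
  apply/existsP; apply: contraR x0 => /existsPn hn.
  rewrite -[x]mul1mx -sumPh mulmx_suml big1 //.
  by move=> h _; apply/eqP; move: (hn h); rewrite negbK.
have vh : v h != 0.
  by apply: contra hx => /eqP vh; rewrite Ph0 // mul0mx.
have ht : 0 < dd h * nrm (Ph h *m x).
  rewrite mulr_gt0 ?nrm_gt0 // /dd invr_gt0 sqrtC_gt0 lt_def cc_eq0 vh cc_ge0 //.
have e : inner x (Pm *m x) = \sum_k dd k * nrm (Ph k *m x).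
  rewrite /inner /Pm mulmx_suml mulmx_sumr summxE; apply: eq_bigr => k _.
  by rewrite -scalemxAl -scalemxAr mxE mulmxA Ph_nrm.
rewrite e (bigD1 h) //=; apply: (lt_le_trans ht); rewrite lerDl.
by apply: sumr_ge0 => k _; rewrite mulr_ge0 ?dd_ge0 ?nrm_ge0.
Qed.

Lemma P_v P k : posdef P -> P *m P = invmx Smx -> P *m v k = dd k *: v k.
Proof.
move=> hP hPP.
have [vk|vk] := eqVneq (v k) 0; first by rewrite vk mulmx0 scaler0.
apply: sqrt_unique => //.
  by rewrite /dd invr_gt0 sqrtC_gt0 lt_def cc_eq0 vk cc_ge0.
by rewrite mulmxA hPP invS_v dd_sq.
Qed.

Lemma P_phi P : posdef P -> P *m P = invmx Smx -> P *m phi = \sum_h dd h *: v h.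
Proof.
move=> hP hPP; rewrite {1}phi_sum mulmx_sumr; apply: eq_bigr => h _; exact: P_v.
Qed.

Lemma P_phiq P q : posdef P -> P *m P = invmx Smx -> P *m phiq q = U q *m (P *m phi).
Proof.
move=> hP hPP; rewrite P_phi // Uphi mulmx_sumr mulmx_sumr.
apply: eq_bigr => h _; rewrite -scalemxAr P_v // -scalemxAr Uv !scalerA mulrC //.
Qed.

Lemma exists_Ph (x : 'cV[algC]_m) : x != 0 -> exists h, Ph h *m x != 0.
Proof.
move=> x0; apply/existsP; apply: contraR x0 => /existsPn hn.
rewrite -[x]mul1mx -sumPh mulmx_suml big1 //.
by move=> h _; apply/eqP; move: (hn h); rewrite negbK.
Qed.

Lemma eig_iff a : eigenvalue Smx a <-> exists2 h, v h != 0 & a = cc h.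
Proof.
split.
  move/eigenvalueP => [y hy y0].
  pose x := adj y.
  have x0 : x != 0 by apply: contra y0 => /eqP h; rewrite -[y]cadjK -/x h cadj0.
  have Sx : Smx *m x = a^* *: x by rewrite /x -{1}Smx_adj -cadjM hy cadjZ.
  have [h hx] := exists_Ph x0.
  have e : (cc h - a^*) *: (Ph h *m x) = 0.
    by rewrite scalerBl scalemxAl -PhS -mulmxA Sx -scalemxAr subrr.
  move/eqP: e; rewrite scalemx_eq0 (negPf hx) orbF subr_eq0 => /eqP e.
  exists h; last by rewrite -[a]conjCK -e cc_real.
  by apply: contra hx => /eqP vh; rewrite Ph0 // mul0mx.
move=> [h vh ->]; apply/eigenvalueP; exists (adj (v h)).
  by rewrite -Smx_adj -cadjM Sv cadjZ cc_real.
by apply: contra vh => /eqP h0; rewrite -[v h]cadjK h0 cadj0.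
Qed.

Lemma exists_v : (0 < m)%N -> exists h, v h != 0.
Proof.
move=> hm; apply/existsP; apply: contraT => /existsPn hn.
have e : (1%:M : 'M[algC]_m) = 0.
  rewrite -sumPh big1 // => h _; apply: Ph0; apply/eqP; move: (hn h); by rewrite negbK.
have := congr1 (fun M : 'M[algC]_m => M (Ordinal hm) (Ordinal hm)) e.
by rewrite !mxE eqxx /= => /eqP; rewrite oner_eq0.
Qed.

Lemma invS_phi : invmx Smx *m phi = \sum_h (cc h)^-1 *: v h.
Proof.
rewrite {1}phi_sum mulmx_sumr; apply: eq_bigr => h _; exact: invS_v.
Qed.

End Main.

Unset Implicit Arguments.

Theorem theorem2
  (p : nat) (nm1 : 'I_p -> nat) (m : nat)
  (U : QT nm1 -> 'M[algC]_m) (phi : 'cV[algC]_m)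
  (hm : (0 < m)%N)
  (hU : forall q, U q \is unitarymx)
  (hinj : injective U)
  (hhom : forall a b, U (qadd a b) = U a *m U b)
  (hspan : \rank (\matrix_(i < m, j < #|QT nm1|) (U (enum_val j) *m phi) i 0) = m) :
  let n := #|QT nm1| in
  let phiq := fun q : QT nm1 => U q *m phi in
  let Phi : 'M[algC]_(m, n) := \matrix_(i < m, j < n) phiq (enum_val j) i 0 in
  let S : 'M[algC]_m := \sum_(q : QT nm1) phiq q *m adj (phiq q) in
  let sqn := sqrtC (n%:R : algC) in
  let s := fun q : QT nm1 => inner (phiq (qzero nm1)) (phiq q) in
  let shat := fun h : QT nm1 => sqn^-1 * \sum_(q : QT nm1) fkern h q * s q in
  let phihat := fun h : QT nm1 =>
    sqn^-1 *: \sum_(q : QT nm1) fkern h q *: phiq q in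
  let sigma := fun h : QT nm1 => sqrtC sqn * sqrtC (shat h) in
  let I := [set h : QT nm1 | sigma h != 0] in
  let u := fun h : QT nm1 => (sigma h)^-1 *: phihat h in
  (* shat is nonnegative, so sigma(h) = n^{1/4} sqrt(shat h) is meaningful *)
  (forall h, 0 <= shat h) /\
  (* (1) singular values of Phi *)
  singular_values Phi [seq sigma h | h <- enum (QT nm1)] /\
  (* (2) dual frame *)
  (let phibar := invmx S *m phi in
     (forall q, invmx S *m phiq q = U q *m phibar) /\
     phibar = sqn^-1 *: \sum_(h in I) (sigma h)^-1 *: u h) /\
  (* (3) canonical tight frame, S^{-1/2} = the positive definite square
     root of S^{-1} *)
  ((exists P : 'M[algC]_m, posdef P /\ P *m P = invmx S) /\
   forall P : 'M[algC]_m, posdef P -> P *m P = invmx S ->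
     (forall q, P *m phiq q = U q *m (P *m phi)) /\
     P *m phi = sqn^-1 *: \sum_(h in I) u h) /\
  (* (4) frame bounds A = lambda_min(S), B = lambda_max(S) *)
  (exists A, is_min_of (fun a => eigenvalue S a) A /\
             is_min_of (fun a => exists2 h, h \in I & a = sqn * shat h) A) /\
  (exists B, is_max_of (fun a => eigenvalue S a) B /\
             is_max_of (fun a => exists2 h, h \in I & a = sqn * shat h) B).
Proof.
move=> n phiq Phi S sqn s shat phihat sigma I u.
have hS : Smx U phi \in unitmx := Smx_unit hspan.
have shatE : forall h, shat h = sqn * nrm (v U phi h).
  by move=> h; exact: (shat_eq phi hU hhom h).
have phihatE : forall h, phihat h = sqn *: v U phi h.
  by move=> h; exact: (phihat_eq U phi h).
have sigmaE : forall h, sigma h = sqn * sqrtC (nrm (v U phi h)).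
  by move=> h; rewrite /sigma shatE; exact: (sigma_eq U phi h).
have uE : forall h, u h = (sqrtC (nrm (v U phi h)))^-1 *: v U phi h.
  move=> h; rewrite /u phihatE sigmaE scalerA invfM mulrAC mulVf ?mul1r //.
  exact: sqn0.
have inI : forall h, (h \in I) = (v U phi h != 0).
  by move=> h; rewrite inE sigmaE sig_eq0.
split.
  by move=> h; rewrite shatE mulr_ge0 ?nrm_ge0 // ltW // sqn_gt0.
split.
  split.
    by apply/allP => x /mapP [h _ ->]; rewrite sigmaE mulr_ge0 ?sqrtC_ge0 ?nrm_ge0 // ltW // sqn_gt0.
  rewrite (char_gram phi hU hhom) [RHS]big_map enumT; apply: eq_bigr => h _.
  by rewrite sigmaE (cc_eq U phi h).
have vI0 : forall h, h \notin I -> v U phi h = 0.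
  by move=> h; rewrite inI negbK => /eqP.
split.
  move=> phibar; split.
    by move=> q; rewrite /phibar (invS hU hhom hS); exact: sumPh_comm.
  rewrite /phibar (invS_phi hU hhom hS) scaler_sumr [RHS]big_mkcond /=.
  apply: eq_bigr => h _; case: ifP => hI; last by rewrite vI0 ?hI // !scaler0.
  rewrite uE sigmaE !scalerA (cc_eq U phi h); congr (_ *: _).
  have r0 : sqrtC (nrm (v U phi h)) != 0.
    by rewrite sqrtC_eq0 nrm_eq0 -inI hI.
  move: (sqrtC (nrm (v U phi h))) r0 => r r0.
  rewrite /sqn /n; move: (sqrtC (#|QT nm1|%:R : algC)) (sqn0 nm1) => w w0.
  by field; rewrite w0 r0.
split.
  split.
    by exists (Pm U phi); split; [exact: (Pm_posdef hU hhom hS) | exact: (Pm_sq hU hhom hS)].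
  move=> P hP hPP; split.
    by move=> q; exact: (P_phiq hU hhom hS).
  rewrite (P_phi hU hhom hS hP hPP) scaler_sumr [RHS]big_mkcond /=.
  apply: eq_bigr => h _; case: ifP => hI; last by rewrite vI0 ?hI // !scaler0.
  rewrite uE (dd_eq U phi h) scalerA invfM //.
have hne : [seq h <- enum (QT nm1) | v U phi h != 0] != [::].
  have [h vh] := exists_v hU hhom hS hm.
  apply/eqP => e; have : h \in [seq h <- enum (QT nm1) | v U phi h != 0].
    by rewrite mem_filter vh mem_enum.
  by rewrite e.
have hreal : forall h, h \in [seq h <- enum (QT nm1) | v U phi h != 0] -> cc U phi h \is Num.real.
  by move=> h _; apply: ger0_real; apply: cc_ge0.
have eigE : forall a, eigenvalue S a <-> exists2 h, v U phi h != 0 & a = cc U phi h.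
  by move=> a; exact: (eig_iff hU hhom hS a).
have setE : forall a, (exists2 h, h \in I & a = sqn * shat h) <-> exists2 h, v U phi h != 0 & a = cc U phi h.
  move=> a; split => -[h hh ->]; exists h; rewrite ?inI ?shatE ?(cc_shat U phi h) //.
  by rewrite -inI.
have memE : forall h, (h \in [seq h <- enum (QT nm1) | v U phi h != 0]) = (v U phi h != 0).
  by move=> h; rewrite mem_filter mem_enum andbT.
split.
  have [h0 h0s h0m] := seq_min hreal hne.
  exists (cc U phi h0); split; split.
  - by apply/eigE; exists h0 => //; rewrite -memE.
  - by move=> b /eigE [h hh ->]; apply: h0m; rewrite memE.
  - by apply/setE; exists h0 => //; rewrite -memE.
  - by move=> b /setE [h hh ->]; apply: h0m; rewrite memE.
have [h0 h0s h0m] := seq_max hreal hne.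
exists (cc U phi h0); split; split.
- by apply/eigE; exists h0 => //; rewrite -memE.
- by move=> b /eigE [h hh ->]; apply: h0m; rewrite memE.
- by apply/setE; exists h0 => //; rewrite -memE.
- by move=> b /setE [h hh ->]; apply: h0m; rewrite memE.
Qed.
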